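(* Consider the CDM model with $\tilde{\lambda}_i>z_i>0$ for all $i\in\mathcal{M}$ and nonnegative $\bm{A}$ satisfying $$A_{ii}>\sum_{j\in\mathcal{M}\setminus\{i\}}A_{ij}\quad\text{for all } i\in\mathcal{M}.$$ Then $\bm{A}$ is nonsingular; every $\bm{x}^\ast>\bm{0}$ is the interior equilibrium of the CDM model for a (unique) associated parameter vector $\bm{q}>\bm{0}$; and for any $\bm{q}>\bm{0}$ for which the interior equilibrium $\bm{x}^\ast>\bm{0}$ exists, the corresponding equilibrium $\bm{y}^\ast$ of the age-structured CDM map is locally asymptotically stable, i.e. the Jacobian $\bm{J}^\ast$ of that map at $\bm{y}^\ast$ satisfies $\rho(\bm{J}^\ast)<1$. (The condition does not depend on the delays $\delta_i$.)
   Context: CDM model: $m\ge1$ species $\mathcal{M}=\{1,\dots,m\}$, delays $\delta_i\in\{0,1,\dots\}$, survival probabilities $\sigma_{a\mid i}\in(0,1]$ ($a<\delta_i$), adult survival $\sigma_{\delta_i\mid i}\in(0,1)$, $z_i=1-\sigma_{\delta_i\mid i}$, fecundity $\lambda_i>0$, $\tilde\lambda_i=\lambda_i\prod_{a=0}^{\delta_i-1}\sigma_{a\mid i}$ (empty product $=1$), $\bm{A}\ge\bm{0}$ ($m\times m$), $\bm{q}>\bm{0}$. Per capita growth $G_i(\bm{x})=\lambda_i/(1+q_i^{-1}\sum_{k}A_{ik}x_k)$. Age-structured map $h$ on $\bm{y}=(y_{a\mid i})$, $0\le a\le\delta_i$, with adults $\bm{x}=(y_{\delta_1\mid1},\dots,y_{\delta_m\mid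 m})^\top$: if $\delta_i>0$, $h_{0\mid i}(\bm{y})=G_i(\bm{x})y_{\delta_i\mid i}$, $h_{a\mid i}(\bm{y})=\sigma_{a-1\mid i}y_{a-1\mid i}$ ($1\le a\le\delta_i-1$), $h_{\delta_i\mid i}(\bm{y})=\sigma_{\delta_i-1\mid i}y_{\delta_i-1\mid i}+\sigma_{\delta_i\mid i}y_{\delta_i\mid i}$; if $\delta_i=0$, $h_{0\mid i}(\bm{y})=\sigma_{0\mid i}y_{0\mid i}+G_i(\bm{x})y_{0\mid i}$. Equivalently adults satisfy $x_i(t+1)=\sigma_{\delta_i\mid i}x_i(t)+\tilde\lambda_ix_i(t-\delta_i)/(1+q_i^{-1}\sum_kA_{ik}x_k(t-\delta_i))$. An interior equilibrium is $\bm{x}^\ast>\bm{0}$ satisfying $\bm{A}\bm{x}^\ast=\mathrm{diag}[\bm{\tilde\lambda}-\bm{z}]\mathrm{diag}[\bm{z}]^{-1}\bm{q}$; the full equilibrium $\bm{y}^\ast$ has $y^\ast_{\delta_i\mid i}=x_i^\ast$ and immature classes determined by $h(\bm{y}^\ast)=\bm{y}^\ast$. $\rho$ denotes spectral radius. *)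

(* Defs.v *)
From HB Require Import structures.
From mathcomp Require Import all_boot all_order all_algebra.
From mathcomp Require Import all_classical all_reals.
From mathcomp Require Import topology normedtype derive.
From mathcomp Require Import complex.
Set Implicit Arguments. Unset Strict Implicit. Unset Printing Implicit Defensive.
Import Order.TTheory GRing.Theory Num.Theory.
Import numFieldNormedType.Exports.
Local Open Scope ring_scope.

(* Parameters of the CDM model with m species:
   delta : 'I_m -> nat       the delays delta_i
   sigma : 'I_m -> nat -> R  sigma i a = sigma_{a|i} (only a <= delta i is used;
                             sigma i (delta i) is the adult survival)
   lam   : 'I_m -> R         the fecundities lambda_i
   A     : 'M[R]_m           interaction matrix
   q     : 'I_m -> R         the vector q                                   *)

Definition zz (R : pzRingType) (m : nat) (delta : 'I_m -> nat)
  (sigma : 'I_m -> nat -> R) (i : 'I_m) : R := 1 - sigma i (delta i).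

Definition lamt (R : pzRingType) (m : nat) (delta : 'I_m -> nat)
  (sigma : 'I_m -> nat -> R) (lam : 'I_m -> R) (i : 'I_m) : R :=
  lam i * \prod_(a < delta i) sigma i a.

Definition Gcdm (R : fieldType) (m : nat) (lam : 'I_m -> R) (A : 'M[R]_m)
  (q : 'I_m -> R) (x : 'I_m -> R) (i : 'I_m) : R :=
  lam i / (1 + (q i)^-1 * \sum_(k < m) A i k * x k).

Definition interior_equilibrium (R : numFieldType) (m : nat)
  (delta : 'I_m -> nat) (sigma : 'I_m -> nat -> R) (lam : 'I_m -> R)
  (A : 'M[R]_m) (q : 'I_m -> R) (xs : 'I_m -> R) : Prop :=
  (forall i, 0 < xs i) /\
  forall i, \sum_(k < m) A i k * xs k =
            (lamt delta sigma lam i - zz delta sigma i) / zz delta sigma i * q i.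

Definition ageT (m : nat) (delta : 'I_m -> nat) : finType :=
  {i : 'I_m & 'I_(delta i).+1}.

Definition dimY (m : nat) (delta : 'I_m -> nat) : nat := #|ageT delta|.

(* The state y is a row vector indexed (through enum_rank) by the age classes. *)
Definition ycomp (R : Type) (m : nat) (delta : 'I_m -> nat)
  (y : 'rV[R]_(dimY delta)) (i : 'I_m) (a : nat) : R :=
  y 0 (enum_rank (Tagged (fun j => 'I_(delta j).+1) (inord a : 'I_(delta i).+1))).

Definition adults (R : Type) (m : nat) (delta : 'I_m -> nat)
  (y : 'rV[R]_(dimY delta)) : 'I_m -> R :=
  fun i => ycomp y i (delta i).

Definition hcomp (R : fieldType) (m : nat) (delta : 'I_m -> nat)
  (sigma : 'I_m -> nat -> R) (lam : 'I_m -> R) (A : 'M[R]_m) (q : 'I_m -> R)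
  (y : 'rV[R]_(dimY delta)) (i : 'I_m) (a : nat) : R :=
  let x := adults y in
  if delta i == 0%N then
    sigma i 0%N * ycomp y i 0 + Gcdm lam A q x i * ycomp y i 0
  else if a == 0%N then Gcdm lam A q x i * ycomp y i (delta i)
  else if (a < delta i)%N then sigma i a.-1 * ycomp y i a.-1
  else sigma i (delta i).-1 * ycomp y i (delta i).-1
       + sigma i (delta i) * ycomp y i (delta i).

Definition hmap (R : fieldType) (m : nat) (delta : 'I_m -> nat)
  (sigma : 'I_m -> nat -> R) (lam : 'I_m -> R) (A : 'M[R]_m) (q : 'I_m -> R)
  (y : 'rV[R]_(dimY delta)) : 'rV[R]_(dimY delta) :=
  \row_k (let ia := enum_val k in
          hcomp sigma lam A q y (tag ia) (nat_of_ord (tagged ia))).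

Definition spectral_radius_lt1 (R : rcfType) (n : nat) (M : 'M[R]_n) : Prop :=
  forall z : R[i], root (char_poly (map_mx (real_complex R) M)) z -> `|z| < 1.

(* Main.v *)
Require Import Defs.
From HB Require Import structures.
From mathcomp Require Import all_boot all_order all_algebra.
From mathcomp Require Import all_classical all_reals.
From mathcomp Require Import topology normedtype derive.
From mathcomp Require Import complex.
From mathcomp Require Import ring lra.
Import Order.TTheory GRing.Theory Num.Theory.
Import numFieldNormedType.Exports.
Set Implicit Arguments. Unset Strict Implicit. Unset Printing Implicit Defensive.
Local Open Scope ring_scope.

Lemma dd (R : numDomainType) n (A : 'I_n -> 'I_n -> R) (p : 'I_n -> R) :
  (forall i j, 0 <= A i j) ->
  (forall i, \sum_(j < n | j != i) A i j < A i i) ->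
  (forall i, 0 <= p i) ->
  (forall i, A i i * p i <= \sum_(j < n | j != i) A i j * p j) ->
  forall i, p i = 0.
Proof.
move=> A0 Ad p0 H i0.
case: (@real_arg_maxP _ _ i0 xpredT p isT) => [i _|k _ Hk]; first exact: ger0_real.
have pk0 : p k = 0.
  have := p0 k; rewrite le_eqVlt => /orP [/eqP <-//|pk'].
  have : A k k * p k <= (\sum_(j < n | j != k) A k j) * p k.
    apply: (le_trans (H k)); rewrite mulr_suml; apply: ler_sum => j _.
    by apply: ler_wpM2l => //; apply: Hk.
  by rewrite ler_pM2r // => /(lt_le_trans (Ad k)); rewrite ltxx.
by apply/eqP; rewrite eq_le p0 andbT -pk0; apply: Hk.
Qed.

Lemma dd_norm (R : numDomainType) n (A : 'I_n -> 'I_n -> R) (u : 'I_n -> R) :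
  (forall i j, 0 <= A i j) ->
  (forall i, \sum_(j < n | j != i) A i j < A i i) ->
  (forall i, \sum_(j < n) A i j * u j = 0) -> forall i, u i = 0.
Proof.
move=> A0 Ad H i; apply/normr0_eq0; move: i; apply: (@dd _ _ A (fun i => `|u i|) A0 Ad); first by []. move=> i.
have := H i; rewrite (bigD1 i) //= => /eqP; rewrite addr_eq0 => /eqP E. idtac.
have -> : A i i * `|u i| = `|A i i * u i| by rewrite normrM (ger0_norm (A0 _ _)).
rewrite E normrN; apply: (le_trans (ler_norm_sum _ _ _)); apply: ler_sum => j _.
by rewrite normrM (ger0_norm (A0 _ _)).
Qed.

Lemma unit_dd (R : realType) m (A : 'M[R]_m) : (forall i j, 0 <= A i j) ->
  (forall i, \sum_(j < m | j != i) A i j < A i i) -> A \in unitmx.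
Proof.
move=> A0 Ad; rewrite unitmxE unitfE -det_tr; apply/negP => /det0P [v v0 Hv].
move/eqP: v0; apply; apply/rowP => j; rewrite mxE.
apply: (@dd_norm _ _ (fun i j => A i j) _ A0 Ad) => i.
move/rowP: Hv => /(_ i); rewrite !mxE => E; rewrite -[RHS]E.
by apply: eq_bigr => k _; rewrite !mxE mulrC.
Qed.

Lemma Axs_pos (R : realType) m (A : 'M[R]_m) (xs : 'I_m -> R) :
  (forall i j, 0 <= A i j) -> (forall i, \sum_(j < m | j != i) A i j < A i i) ->
  (forall i, 0 < xs i) -> forall i, A i i * xs i <= \sum_(k < m) A i k * xs k /\
   0 < A i i * xs i.
Proof.
move=> A0 Ad xs0 i; split.
  rewrite (bigD1 i) //= lerDl; apply: sumr_ge0 => k _.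
  by apply: mulr_ge0 => //; apply: ltW.
apply: mulr_gt0 => //; apply: le_lt_trans (Ad i); apply: sumr_ge0 => k _; exact: A0.
Qed.

Lemma part2 (R : realType) (m : nat) (delta : 'I_m -> nat)
  (sigma : 'I_m -> nat -> R) (lam : 'I_m -> R) (A : 'M[R]_m) :
  (forall i, 0 < zz delta sigma i < lamt delta sigma lam i) ->
  (forall i j, 0 <= A i j) ->
  (forall i, A i i > \sum_(j < m | j != i) A i j) ->
  (forall xs : 'I_m -> R, (forall i, 0 < xs i) ->
         exists! q : 'I_m -> R, (forall i, 0 < q i) /\
           interior_equilibrium delta sigma lam A q xs).
Proof.
move=> Hz A0 Ad xs xs0.
pose c i := (lamt delta sigma lam i - zz delta sigma i) / zz delta sigma i.
have c0 i : 0 < c i.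
  by have /andP[z0 zl] := Hz i; rewrite /c divr_gt0 // subr_gt0.
exists (fun i => (\sum_(k < m) A i k * xs k) / c i); split.
  split=> [i|].
    apply: divr_gt0 => //; have [H1 H2] := Axs_pos A0 Ad xs0 i.
    exact: lt_le_trans H2 H1.
  split=> // i; rewrite -/(c i) [RHS]mulrC divfK //; exact: lt0r_neq0.
move=> q [q0 [_ Hq]]; apply: funext => i /=.
by rewrite Hq -/(c i) [_ * q i]mulrC mulfK //; exact: lt0r_neq0.
Qed.

Lemma deriveZl_ (R : realType) n (V : normedModType R) (k : 'rV[R]_n -> R) (f : V) p v :
  differentiable k p -> 'D_v (fun z => k z *: f) p = 'D_v k p *: f.
Proof.
move=> dk; rewrite deriveE; last exact: differentiableZl.
by rewrite diffZl // deriveE.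
Qed.

Lemma row_diff (R : realType) n N (f : 'I_N -> 'rV[R]_n -> R) p :
  (forall k, differentiable (f k) p) ->
  differentiable (fun y => \row_k f k y) p /\
  forall v, 'D_v (fun y => \row_k f k y) p = \row_k 'D_v (f k) p.
Proof.
move=> df.
have E : (fun y => \row_k f k y) = \sum_(k < N) (fun y => f k y *: ('e_k : 'rV[R]_N)).
  apply: funext => y; rewrite fct_sumE [LHS]row_sum_delta.
  by apply: eq_bigr => k _; rewrite mxE.
have dk k : differentiable (fun y => f k y *: ('e_k : 'rV[R]_N)) p.
  exact: differentiableZl.
rewrite E; split; first exact: differentiable_sum.
move=> v; rewrite derive_sum; last by move=> k; apply: diff_derivable.
rewrite [RHS]row_sum_delta; apply: eq_bigr => k _.
by rewrite deriveZl_ // mxE.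
Qed.

Lemma coord_diff (R : realType) n (j : 'I_n) (p v : 'rV[R]_n) :
  differentiable (fun y : 'rV[R]_n => y 0 j) p /\
  'D_v (fun y : 'rV[R]_n => y 0 j) p = v 0 j.
Proof.
split; first exact: differentiable_coord.
have @f : {linear 'rV[R]_n -> R}.
  by exists (fun N : 'rV[R]_n => N 0 j); do 2![eexists]; do ?[constructor];
     rewrite ?mxE// => ? *; rewrite ?mxE//; move=> ?; rewrite !mxE.
rewrite (_ : (fun _ => _) = f) //.
rewrite deriveE; last exact/linear_differentiable/coord_continuous.
by rewrite diff_lin //; apply: coord_continuous.
Qed.

Section Calc.
Variables (R : realType) (n : nat).
Local Notation V := 'rV[R]_n.

Definition HD (f : V -> R) (p : V) (D : V -> R) :=
  differentiable f p /\ forall v, 'D_v f p = D v.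

Lemma HD_cst (c : R) p : HD (fun _ => c) p (fun _ => 0).
Proof.
split; first exact: differentiable_cst.
by move=> v; rewrite (_ : (fun _ => c) = cst c) // derive_cst.
Qed.

Lemma HD_coord j p : HD (fun y : V => y 0 j) p (fun v => v 0 j).
Proof. by split; [exact: (coord_diff j p 0).1| move=> v; exact: (coord_diff j p v).2]. Qed.

Lemma HD_add f g p Df Dg : HD f p Df -> HD g p Dg ->
  HD (fun y => f y + g y) p (fun v => Df v + Dg v).
Proof.
move=> [df Ef] [dg Eg]; split.
  by have := differentiableD df dg.
move=> v; rewrite (_ : (fun y => f y + g y) = f + g) //.
by rewrite deriveD ?Ef ?Eg //; apply: diff_derivable.
Qed.

Lemma HD_mul f g p Df Dg : HD f p Df -> HD g p Dg ->
  HD (fun y => f y * g y) p (fun v => f p * Dg v + g p * Df v).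
Proof.
move=> [df Ef] [dg Eg]; split.
  by have := differentiableM df dg.
move=> v; rewrite (_ : (fun y => f y * g y) = f * g) //.
by rewrite deriveM ?Ef ?Eg //; apply: diff_derivable.
Qed.

Lemma HD_inv f p Df : HD f p Df -> f p != 0 ->
  HD (fun y => (f y)^-1) p (fun v => - (f p) ^- 2 * Df v).
Proof.
move=> [df Ef] fp; split; first exact: differentiableV.
by move=> v; rewrite deriveV ?Ef //; apply: diff_derivable.
Qed.

Lemma HD_sum m (f : 'I_m -> V -> R) p Df : (forall k, HD (f k) p (Df k)) ->
  HD (fun y => \sum_(k < m) f k y) p (fun v => \sum_(k < m) Df k v).
Proof.
elim: m f Df => [|m IH] f Df H.
  under eq_fun do rewrite big_ord0.
  by under [X in HD _ _ X]eq_fun do rewrite big_ord0; apply: HD_cst.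
under eq_fun do rewrite big_ord_recr.
under [X in HD _ _ X]eq_fun do rewrite big_ord_recr.
apply: HD_add; last exact: H.
exact: (IH (fun k => f (widen_ord (leqnSn m) k)) (fun k => Df (widen_ord (leqnSn m) k))).
Qed.

End Calc.

Lemma HD_ext (R : realType) n (f g : 'rV[R]_n -> R) p D D' :
  HD f p D -> f = g -> (forall v, D v = D' v) -> HD g p D'.
Proof. by move=> [df E] <- E'; split => // v; rewrite E E'. Qed.

Definition hlc (K : fieldType) m (delta : 'I_m -> nat) (sg : 'I_m -> nat -> K)
  (Gv Gd : 'I_m -> K) (AK : 'M[K]_m) (v : 'rV[K]_(dimY delta)) i (a : nat) : K :=
  let S := \sum_(j < m) AK i j * adults v j in
  if delta i == 0%N then sg i 0%N * ycomp v i 0 + (Gv i * ycomp v i 0 + Gd i * S)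
  else if a == 0%N then Gv i * ycomp v i (delta i) + Gd i * S
  else if (a < delta i)%N then sg i a.-1 * ycomp v i a.-1
  else sg i (delta i).-1 * ycomp v i (delta i).-1 + sg i (delta i) * ycomp v i (delta i).

Definition hlin (K : fieldType) m (delta : 'I_m -> nat) (sg : 'I_m -> nat -> K)
  (Gv Gd : 'I_m -> K) (AK : 'M[K]_m) (v : 'rV[K]_(dimY delta)) : 'rV[K]_(dimY delta) :=
  \row_k (let ia := enum_val k in hlc sg Gv Gd AK v (tag ia) (nat_of_ord (tagged ia))).

Section HmapDiff.
Variables (R : realType) (m : nat) (delta : 'I_m -> nat)
  (sigma : 'I_m -> nat -> R) (lam : 'I_m -> R) (A : 'M[R]_m) (q : 'I_m -> R)
  (ys : 'rV[R]_(dimY delta)).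

Definition Dn i := 1 + (q i)^-1 * \sum_(k < m) A i k * adults ys k.
Definition Gd i := ycomp ys i (delta i) * (- lam i * (Dn i)^-2 * (q i)^-1).
Definition Gv i := Gcdm lam A q (adults ys) i.

Lemma HD_ycomp i a : HD (fun y => ycomp y i a) ys (fun v => ycomp v i a).
Proof. exact: HD_coord. Qed.

Lemma HD_S i : HD (fun y => \sum_(k < m) A i k * adults y k) ys
   (fun v => \sum_(k < m) A i k * adults v k).
Proof.
apply: HD_ext (HD_sum (fun k => HD_mul (HD_cst (A i k) ys) (HD_ycomp k (delta k)))) _ _ => //.
by move=> v; apply: eq_bigr => k _; rewrite mulr0 addr0.
Qed.

Lemma HD_G i : Dn i != 0 ->
  HD (fun y => Gcdm lam A q (adults y) i) ys
     (fun v => - lam i * (Dn i)^-2 * (q i)^-1 * \sum_(k < m) A i k * adults v k).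
Proof.
move=> Dn0.
have H1 := HD_add (HD_cst 1 ys) (HD_mul (HD_cst (q i)^-1 ys) (HD_S i)).
have H2 := HD_mul (HD_cst (lam i) ys) (HD_inv H1 Dn0).
apply: HD_ext H2 _ _ => //.
move=> v /=; rewrite mulr0 !add0r addr0; rewrite /Dn; ring.
Qed.

Lemma HD_hmap : (forall i, Dn i != 0) ->
  differentiable (hmap sigma lam A q) ys /\
  forall v, 'D_v (hmap sigma lam A q) ys = hlin sigma Gv Gd A v.
Proof.
move=> Dn0.
pose f (k : 'I_(dimY delta)) (y : 'rV[R]_(dimY delta)) := let ia := enum_val k in hcomp sigma lam A q y (tag ia) (nat_of_ord (tagged ia)).
have Hf (k : 'I_(dimY delta)) : HD (f k) ys (fun v => let ia := enum_val k in hlc sigma Gv Gd A v (tag ia) (nat_of_ord (tagged ia))).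
  rewrite /f /hcomp /hlc /=; case: (enum_val k) => i a /=.
  case: eqP => [d0|dn0].
    apply: HD_ext (HD_add (HD_mul (HD_cst (sigma i 0%N) ys) (HD_ycomp i 0))
                   (HD_mul (HD_G (Dn0 i)) (HD_ycomp i 0))) _ _ => //.
    move=> v /=; rewrite /Gd /Gv d0; ring.
  case: eqP => [a0|an0].
    apply: HD_ext (HD_mul (HD_G (Dn0 i)) (HD_ycomp i (delta i))) _ _ => //.
    move=> v /=; rewrite /Gd /Gv; ring.
  case: (ltnP a (delta i)) => _.
    apply: HD_ext (HD_mul (HD_cst (sigma i a.-1) ys) (HD_ycomp i a.-1)) _ _ => //.
    move=> v /=; ring.
  apply: HD_ext (HD_add (HD_mul (HD_cst (sigma i (delta i).-1) ys) (HD_ycomp i (delta i).-1))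
                        (HD_mul (HD_cst (sigma i (delta i)) ys) (HD_ycomp i (delta i)))) _ _ => //.
  move=> v /=; ring.
have [dr Er] := row_diff (fun k => (Hf k).1).
have -> : hmap sigma lam A q = fun y => \row_k f k y by [].
split => // v; rewrite Er; apply/rowP => k; rewrite !mxE.
exact: (Hf k).2.
Qed.

End HmapDiff.

Definition hlcW (K : fieldType) m (delta : 'I_m -> nat) (sg : 'I_m -> nat -> K)
  (Gv Gd : 'I_m -> K) (AK : 'M[K]_m) (W : 'I_m -> nat -> K) i (a : nat) : K :=
  let S := \sum_(j < m) AK i j * W j (delta j) in
  if delta i == 0%N then sg i 0%N * W i 0%N + (Gv i * W i 0%N + Gd i * S)
  else if a == 0%N then Gv i * W i (delta i) + Gd i * S
  else if (a < delta i)%N then sg i a.-1 * W i a.-1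
  else sg i (delta i).-1 * W i (delta i).-1 + sg i (delta i) * W i (delta i).

Lemma core (C : numFieldType) m (delta : 'I_m -> nat) (sg : 'I_m -> nat -> C)
  (Gv Gd wt zc : 'I_m -> C) (AK : 'M[C]_m) (W : 'I_m -> nat -> C) (z : C) :
  1 <= `|z| ->
  (forall i j, 0 <= AK i j) -> (forall i, \sum_(j < m | j != i) AK i j < AK i i) ->
  (forall i, 0 <= sg i (delta i)) -> (forall i, zc i = 1 - sg i (delta i)) ->
  (forall i, (\prod_(a < delta i) sg i a) * Gv i = zc i) ->
  (forall i, (\prod_(a < delta i) sg i a) * Gd i = - wt i) ->
  (forall i, 0 < wt i) -> (forall i, wt i * AK i i <= zc i) ->
  (forall i a, (a <= delta i)%N -> z * W i a = hlcW delta sg Gv Gd AK W i a) ->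
  forall i a, (a <= delta i)%N -> W i a = 0.
Proof.
move=> z1 A0 Ad sg0 zcE PGv PGd wt0 wtA Heq.
have z0 : z != 0 by apply: contraTneq z1 => ->; rewrite normr0 ler10.
pose u i := W i (delta i).
pose S i := \sum_(j < m) AK i j * u j.
have hW i a : (0 < delta i)%N -> (a < delta i)%N ->
    z ^+ a * W i a = (\prod_(b < a) sg i b) * W i 0%N.
  move=> dpos; elim: a => [|a IH] ha; first by rewrite expr0 mul1r big_ord0 mul1r.
  rewrite exprSr -mulrA Heq; last exact: ltnW.
  have dn : (delta i == 0%N) = false by apply/negbTE; rewrite -lt0n.
  rewrite /hlcW dn ha /=.
  rewrite mulrCA IH; last exact: ltnW.
  by rewrite big_ord_recr /= mulrA [_ * sg i a]mulrC.
have key i : (z ^+ delta i * (z - sg i (delta i)) - zc i) * u i = - wt i * S i.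
  have := PGd i; have := PGv i; rewrite /u.
  have E0 := Heq i 0%N (leq0n _); have Ed := Heq i (delta i) (leqnn _).
  have hW' := hW i (delta i).-1.
  rewrite /hlcW -/(S i) in E0 Ed.
  move: E0 Ed hW'; case: (delta i) => [|d].
    rewrite big_ord0 !mul1r eqxx => E0 _ _ E2 E3.
    apply/eqP; rewrite -subr_eq0 -E3.
    have -> : (z - sg i 0%N - zc i) * W i 0%N - Gd i * S i =
      z * W i 0%N - (sg i 0%N * W i 0%N + (Gv i * W i 0%N + Gd i * S i)) by rewrite -E2; ring.
    by rewrite E0 subrr.
  rewrite ltnn /= => E0 Ed /(_ isT (ltnSn _)) E5 E2 E3.
  apply/eqP; rewrite -subr_eq0 -E3 -E2 big_ord_recr /=.
  set P := \prod_(b < d) sg i b.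
  have -> : (z ^+ d.+1 * (z - sg i d.+1) - P * sg i d * Gv i) * W i d.+1 - P * sg i d * Gd i * S i
    = z ^+ d * z * (z * W i d.+1 - (sg i d * W i d + sg i d.+1 * W i d.+1))
      + z * sg i d * (z ^+ d * W i d - P * W i 0%N)
      + P * sg i d * (z * W i 0%N - (Gv i * W i d.+1 + Gd i * S i)).
    rewrite exprSr; ring.
  by rewrite Ed E5 E0 !subrr !mulr0 !addr0.
have u0 i : u i = 0.
  apply/normr0_eq0; move: i.
  apply: (@dd _ _ AK (fun i => `|u i|) A0 Ad) => i; first exact: normr_ge0.
  have K := key i; rewrite /S (bigD1 i) //= in K.
  set X := z ^+ delta i * (z - sg i (delta i)) in K.
  set T := \sum_(j < m | j != i) AK i j * u j in K.
  have K2 : (X - (zc i - wt i * AK i i)) * u i = - (wt i * T).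
    rewrite (_ : (X - (zc i - wt i * AK i i)) * u i = (X - zc i) * u i + wt i * AK i i * u i); last by ring.
    by rewrite K; ring.
  have hX : zc i <= `|X|.
    rewrite normrM normrX.
    apply: (@le_trans _ _ `|z - sg i (delta i)|).
      rewrite zcE; apply: le_trans (lerB_dist z (sg i (delta i))).
      by rewrite (ger0_norm (sg0 i)) lerD2r.
    by apply: ler_peMl => //; exact: exprn_ege1.
  have hY : 0 <= zc i - wt i * AK i i by rewrite subr_ge0.
  have lb : wt i * AK i i <= `|X - (zc i - wt i * AK i i)|.
    apply: le_trans (lerB_dist _ _); rewrite (ger0_norm hY).
    rewrite (_ : `|X| - (zc i - wt i * AK i i) = wt i * AK i i + (`|X| - zc i)); last by ring.
    by rewrite lerDl subr_ge0.
  rewrite -(ler_pM2l (wt0 i)).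
  apply: (@le_trans _ _ (`|X - (zc i - wt i * AK i i)| * `|u i|)).
    by rewrite mulrA; apply: ler_wpM2r.
  rewrite -normrM K2 normrN normrM (gtr0_norm (wt0 i)) ler_pM2l //.
  apply: le_trans (ler_norm_sum _ _ _) _; apply: ler_sum => j _.
  by rewrite normrM (ger0_norm (A0 _ _)).
have S0 i : S i = 0 by rewrite /S big1 // => j _; rewrite u0 mulr0.
move=> i a ha.
case: (posnP (delta i)) => [d0|dpos].
  by move: ha; rewrite d0 leqn0 => /eqP ->; have := u0 i; rewrite /u d0.
have W0 : W i 0%N = 0.
  have := Heq i 0%N (leq0n _); rewrite /hlcW -/(S i) S0.
  have dn : (delta i == 0%N) = false by apply/negbTE; rewrite -lt0n.
  rewrite dn eqxx /= -/(u i) u0 !mulr0 addr0 => /eqP; rewrite mulf_eq0 (negbTE z0) /=.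
  by move/eqP.
move: ha; rewrite leq_eqVlt => /orP [/eqP ->|ha]; first exact: u0.
have := hW i a dpos ha; rewrite W0 mulr0 => /eqP; rewrite mulf_eq0 expf_eq0 (negbTE z0) andbF /=.
by move/eqP.
Qed.

Lemma hlin_lin (K : fieldType) m (delta : 'I_m -> nat) (sg : 'I_m -> nat -> K)
  (Gv Gd : 'I_m -> K) (AK : 'M[K]_m) (c : K) (u w : 'rV[K]_(dimY delta)) :
  hlin sg Gv Gd AK (c *: u + w) = c *: hlin sg Gv Gd AK u + hlin sg Gv Gd AK w.
Proof.
apply/rowP => k; rewrite !mxE /hlc /adults.
have yc i a : ycomp (c *: u + w) i a = c * ycomp u i a + ycomp w i a by rewrite /ycomp !mxE.
have Ss i : \sum_(j < m) AK i j * ycomp (c *: u + w) j (delta j) =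
   c * \sum_(j < m) AK i j * ycomp u j (delta j) + \sum_(j < m) AK i j * ycomp w j (delta j).
  rewrite mulr_sumr -big_split; apply: eq_bigr => j _; rewrite yc /=; ring.
rewrite Ss !yc.
case: (delta _ == 0%N); first by ring.
case: (_ == 0%N); first by ring.
by case: (_ < _)%N; ring.
Qed.

Lemma hlin_map (R K : fieldType) (f : {rmorphism R -> K}) m (delta : 'I_m -> nat)
  (sg : 'I_m -> nat -> R) (Gv Gd : 'I_m -> R) (AK : 'M[R]_m) (v : 'rV[R]_(dimY delta)) :
  map_mx f (hlin sg Gv Gd AK v) =
  hlin (fun i a => f (sg i a)) (fun i => f (Gv i)) (fun i => f (Gd i)) (map_mx f AK) (map_mx f v).
Proof.
apply/rowP => k; rewrite !mxE /hlc /adults.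
have yc i a : ycomp (map_mx f v) i a = f (ycomp v i a) by rewrite /ycomp !mxE.
have Ss i : \sum_(j < m) map_mx f AK i j * ycomp (map_mx f v) j (delta j) =
   f (\sum_(j < m) AK i j * ycomp v j (delta j)).
  by rewrite rmorph_sum; apply: eq_bigr => j _; rewrite yc mxE rmorphM.
rewrite Ss !yc.
case: (delta _ == 0%N); first by rewrite !rmorphD !rmorphM.
case: (_ == 0%N); first by rewrite !rmorphD !rmorphM.
by case: (_ < _)%N; rewrite ?rmorphD !rmorphM.
Qed.

Lemma J_complex (R : realType) N (J : 'M[R]_N) (L : 'rV[R]_N -> 'rV[R]_N)
  (LC : 'rV[R[i]]_N -> 'rV[R[i]]_N) :
  (forall v, v *m J = L v) ->
  (forall v, map_mx (real_complex R) (L v) = LC (map_mx (real_complex R) v)) ->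
  (forall c u w, LC (c *: u + w) = c *: LC u + LC w) ->
  forall w, w *m map_mx (real_complex R) J = LC w.
Proof.
move=> HJ HL HLC w.
have Ew : w = 'i%C *: map_mx (real_complex R) (map_mx (@complex.Im R) w)
              + map_mx (real_complex R) (map_mx (@complex.Re R) w).
  by apply/rowP => k; rewrite !mxE {1}[w 0 k]complexE addrC.
by rewrite {1}Ew mulmxDl -scalemxAl -!map_mxM !HJ !HL -HLC -Ew.
Qed.

Lemma part3 (R : realType) (m : nat) (delta : 'I_m -> nat)
  (sigma : 'I_m -> nat -> R) (lam : 'I_m -> R) (A : 'M[R]_m) :
  (forall i (a : nat), (a < delta i)%N -> 0 < sigma i a <= 1) ->
  (forall i, 0 < sigma i (delta i) < 1) ->
  (forall i, 0 < lam i) ->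
  (forall i, 0 < zz delta sigma i < lamt delta sigma lam i) ->
  (forall i j, 0 <= A i j) ->
  (forall i, A i i > \sum_(j < m | j != i) A i j) ->
  forall (q xs : 'I_m -> R) (ys : 'rV[R]_(dimY delta)),
         (forall i, 0 < q i) ->
         interior_equilibrium delta sigma lam A q xs ->
         adults ys = xs ->
         spectral_radius_lt1 ('J (hmap sigma lam A q) ys).
Proof.
move=> Hs Hsd Hl Hz A0 Ad q xs ys q0 [xs0 Heqm] Had.
pose P i := \prod_(a < delta i) sigma i a.
have P0 i : 0 < P i by apply: prodr_gt0 => a _; have /andP[] := Hs i a (ltn_ord a).
have Z0 i : 0 < zz delta sigma i by case/andP: (Hz i).
have L0 i : 0 < lamt delta sigma lam i by case/andP: (Hz i) => a b; exact: lt_trans a b.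
have SE i : \sum_(k < m) A i k * adults ys k =
    (lamt delta sigma lam i - zz delta sigma i) / zz delta sigma i * q i by rewrite Had Heqm.
have DnE i : Dn A q ys i = lamt delta sigma lam i / zz delta sigma i.
  rewrite /Dn SE; field.
  by rewrite !lt0r_neq0.
have Dn0 i : Dn A q ys i != 0 by rewrite DnE lt0r_neq0 // divr_gt0.
have [dH DH] := HD_hmap sigma lam Dn0.
have HJ v : v *m 'J (hmap sigma lam A q) ys = hlin sigma (Gv lam A q ys) (Gd lam A q ys) A v.
  by rewrite -deriveEjacobian // DH.
pose f := real_complex R.
have HJC := J_complex HJ (fun v => hlin_map f _ _ _ _ v) (fun c u w => hlin_lin _ _ _ _ c u w).
pose wtr i := - (P i * Gd lam A q ys i).
have lamtE i : lamt delta sigma lam i = lam i * P i by [].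
have GdE i : Gd lam A q ys i = xs i * (- lam i * (Dn A q ys i)^-2 * (q i)^-1).
  by rewrite /Gd -Had.
have wtE i : wtr i = xs i * zz delta sigma i ^+ 2 / (lamt delta sigma lam i * q i).
  rewrite /wtr GdE DnE lamtE; field.
  by rewrite !lt0r_neq0.
have wt0 i : 0 < wtr i.
  by rewrite wtE; apply: divr_gt0; [apply: mulr_gt0; [|apply: exprn_gt0]|apply: mulr_gt0].
have PGv i : P i * Gv lam A q ys i = zz delta sigma i.
  rewrite /Gv /Gcdm -/(Dn A q ys i) DnE.
  have := lamtE i; rewrite /P => ->; rewrite -/(P i); field.
  by rewrite !lt0r_neq0.
have wtA i : wtr i * A i i <= zz delta sigma i.
  have [H1 _] := Axs_pos A0 Ad xs0 i.
  rewrite Heqm in H1.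
  set Z := zz delta sigma i in H1 *; set L := lamt delta sigma lam i in H1 *.
  have H2 : A i i * xs i * Z <= L * q i.
    have e : (L - Z) / Z * q i * Z = (L - Z) * q i by field; exact: lt0r_neq0 (Z0 i).
    apply: (le_trans (ler_wpM2r (ltW (Z0 i)) H1)); rewrite e.
    apply: ler_wpM2r; [exact: ltW (q0 i) | rewrite lerBlDr lerDl; exact: ltW (Z0 i)].
  have -> : wtr i * A i i = Z * ((A i i * xs i * Z) / (L * q i)).
    rewrite wtE -/Z -/L; field.
    by rewrite !lt0r_neq0 ?q0 ?L0.
  rewrite ger_pMr; last exact: Z0 i.
  rewrite ler_pdivrMr; last exact: mulr_gt0 (L0 i) (q0 i).
  by rewrite mul1r.
move=> z; rewrite -eigenvalue_root_char => /eigenvalueP [w Hw w0].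
rewrite HJC in Hw.
rewrite real_ltNge ?realE ?normr_ge0 ?ler01 //; apply/negP => z1.
move/negP: w0; apply; apply/eqP.
have W0 := @core _ m delta (fun i a => f (sigma i a)) (fun i => f (Gv lam A q ys i))
   (fun i => f (Gd lam A q ys i)) (fun i => f (wtr i)) (fun i => f (zz delta sigma i))
   (map_mx f A) (fun i a => ycomp w i a) z z1.
have h1 i j : 0 <= map_mx f A i j by rewrite mxE ler0c.
have h2 i : \sum_(j < m | j != i) map_mx f A i j < map_mx f A i i.
  rewrite mxE (eq_bigr (fun j => f (A i j))); last by move=> j _; rewrite mxE.
  by rewrite -rmorph_sum ltcR.
have h3 i : 0 <= f (sigma i (delta i)) by rewrite ler0c; case/andP: (Hsd i) => a _; exact: ltW.
have h4 i : f (zz delta sigma i) = 1 - f (sigma i (delta i)).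
  by rewrite /f rmorphB rmorph1.
have h5 i : \prod_(a < delta i) f (sigma i a) * f (Gv lam A q ys i) = f (zz delta sigma i).
  by rewrite -rmorph_prod -rmorphM PGv.
have h6 i : \prod_(a < delta i) f (sigma i a) * f (Gd lam A q ys i) = - f (wtr i).
  by rewrite -rmorph_prod -rmorphM -rmorphN /wtr opprK.
have h7 i : 0 < f (wtr i) by rewrite /f -(rmorph0 (real_complex R)) ltcR.
have h8 i : f (wtr i) * map_mx f A i i <= f (zz delta sigma i) by rewrite mxE -rmorphM lecR.
have {W0}W0 := W0 h1 h2 h3 h4 h5 h6 h7 h8.
have h9 i a : (a <= delta i)%N -> z * ycomp w i a =
    hlcW delta (fun i a => f (sigma i a)) (fun i => f (Gv lam A q ys i))
      (fun i => f (Gd lam A q ys i)) (map_mx f A) (fun i a => ycomp w i a) i a.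
  move=> ha.
  pose k := enum_rank (Tagged (fun j => 'I_(delta j).+1) (inord a : 'I_(delta i).+1)).
  move/rowP: Hw => /(_ k); rewrite !mxE /k enum_rankK /= inordK; last by rewrite ltnS.
  move=> E.
  by rewrite /ycomp -E.
have {W0}W0 := W0 h9.
apply/rowP => k; rewrite mxE.
rewrite -(enum_valK k); case: (enum_val k) => i a.
have := W0 i a (ltn_ord a) ; rewrite /ycomp inord_val => ->.
done.
Qed.


Unset Implicit Arguments.

Theorem proposition1 (R : realType) (m : nat) (delta : 'I_m -> nat)
  (sigma : 'I_m -> nat -> R) (lam : 'I_m -> R) (A : 'M[R]_m) :
  (0 < m)%N ->
  (forall i (a : nat), (a < delta i)%N -> 0 < sigma i a <= 1) ->
  (forall i, 0 < sigma i (delta i) < 1) ->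
  (forall i, 0 < lam i) ->
  (forall i, 0 < zz delta sigma i < lamt delta sigma lam i) ->
  (forall i j, 0 <= A i j) ->
  (forall i, A i i > \sum_(j < m | j != i) A i j) ->
  [/\ A \in unitmx,
      (forall xs : 'I_m -> R, (forall i, 0 < xs i) ->
         exists! q : 'I_m -> R, (forall i, 0 < q i) /\
           interior_equilibrium delta sigma lam A q xs)
    & (forall (q xs : 'I_m -> R) (ys : 'rV[R]_(dimY delta)),
         (forall i, 0 < q i) ->
         interior_equilibrium delta sigma lam A q xs ->
         hmap sigma lam A q ys = ys ->
         adults ys = xs ->
         spectral_radius_lt1 ('J (hmap sigma lam A q) ys))].
Proof.
move=> m0 Hs Hsd Hl Hz A0 Ad; split.
- exact: (unit_dd A0 Ad).
- exact: (part2 Hz A0 Ad).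
- move=> q xs ys q0 He _ Had; exact: (part3 Hs Hsd Hl Hz A0 Ad q0 He Had).
Qed.
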